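(* Let $A=\mathrm{diag}(\lambda_1,\dots,\lambda_k)$ with distinct real $\lambda_j$, $|\lambda_j|>1$, and let $\mathbf 1\in\mathbb R^k$ be the all-ones vector. Let $M$ be the unique solution of the Lyapunov equation $M=A^{-1}MA^{-T}+\mathbf 1\mathbf 1^T$. Then $M\succ0$ and $$\mathbf 1^TM^{-1}\mathbf 1=1-|\det A|^{-2}.$$ *)

(* Defs.v *)
From HB Require Import structures.
From mathcomp Require Import all_boot all_order all_algebra.
Set Implicit Arguments. Unset Strict Implicit. Unset Printing Implicit Defensive.
Import Order.TTheory GRing.Theory Num.Theory.
Local Open Scope ring_scope.

Definition posdef (R : realFieldType) (k : nat) (M : 'M[R]_k) : Prop :=
  M^T = M /\ forall x : 'cV[R]_k, x != 0 -> 0 < (x^T *m M *m x) 0 0.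

(* Main.v *)
Require Import Defs.
From HB Require Import structures.
From mathcomp Require Import all_boot all_order all_algebra.
From mathcomp Require Import ring lra.
Import Order.TTheory GRing.Theory Num.Theory.
Local Open Scope ring_scope.

Section Q.
Set Implicit Arguments. Unset Strict Implicit.
Variables (R : realFieldType) (k : nat) (mu : 'I_k -> R).
Hypothesis hmu : forall i, `|mu i| < 1.
Hypothesis hinj : injective mu.

Lemma one_sub_mul_gt0 (x y : R) : `|x| < 1 -> `|y| < 1 -> 0 < 1 - x * y.
Proof.
move=> hx hy.
have h1 : x * y <= `|x * y| by apply: ler_norm.
rewrite normrM in h1.
have h2 : 0 <= `|x| by []. have h3 : 0 <= `|y| by [].
nra.
Qed.

Lemma Kid (a b c : R) : `|a| < 1 -> `|b| < 1 -> `|c| < 1 ->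
  (1 - b * c)^-1 = (1 - a ^+ 2) * ((1 - a * b)^-1 * (1 - a * c)^-1)
     + ((b - a) / (1 - a * b)) * ((c - a) / (1 - a * c)) * (1 - b * c)^-1.
Proof.
move=> ha hb hc.
have h1 := one_sub_mul_gt0 ha hb. have h2 := one_sub_mul_gt0 ha hc.
have h3 := one_sub_mul_gt0 hb hc.
field. rewrite !lt0r_neq0 //.
Qed.

Definition q (y : 'I_k -> R) :=
  \sum_i \sum_j y i * y j * (1 - mu i * mu j)^-1.

Lemma qstep a (y : 'I_k -> R) : `|a| < 1 ->
  q y = (1 - a ^+ 2) * (\sum_i y i / (1 - a * mu i)) ^+ 2
      + q (fun i => y i * ((mu i - a) / (1 - a * mu i))).
Proof.
move=> ha; rewrite /q [(\sum_i _) ^+ 2]expr2 big_distrl mulr_sumr -big_split /=.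
apply: eq_bigr => i _; rewrite big_distrr mulr_sumr -big_split /=.
apply: eq_bigr => j _; rewrite {1}(Kid ha (hmu i) (hmu j)); ring.
Qed.


Lemma qpos n : forall y : 'I_k -> R, (forall i : 'I_k, (n <= i)%N -> y i = 0) ->
  (exists i, y i != 0) -> 0 < q y.
Proof.
elim: n => [|n IH] y hs hex; case: hex => i0 hi0.
  by move: hi0; rewrite hs ?eqxx.
case: (ltnP n k) => hnk; last first.
  apply: IH => //; last by exists i0.
  move=> i hi; have := ltn_ord i; rewrite ltnNge (leq_trans hnk hi) //.
pose m := Ordinal hnk; pose a := mu m.
pose phi i := (mu i - a) / (1 - a * mu i).
have hpos i : 0 < 1 - a * mu i by apply: one_sub_mul_gt0; apply: hmu.
rewrite (qstep y (hmu m)) -/a.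
have ha2 : 0 < 1 - a ^+ 2 by rewrite expr2; apply: hpos.
have hy' : forall i : 'I_k, (n <= i)%N -> y i * phi i = 0.
  move=> i; rewrite leq_eqVlt => /orP[/eqP hi|hi].
    have -> : i = m by apply: val_inj.
    by rewrite /phi subrr mul0r mulr0.
  by rewrite hs ?mul0r.
have hfirst : 0 <= (1 - a ^+ 2) * (\sum_i y i / (1 - a * mu i)) ^+ 2.
  by apply: mulr_ge0; [apply: ltW | apply: sqr_ge0].
case: (boolP [exists i, y i * phi i != 0]) => [/existsP [i1 hi1]|/existsPn hall].
  have := IH _ hy' (ex_intro _ i1 hi1); rewrite /phi => h; lra.
have hall' : forall i, y i * phi i = 0 by move=> i; apply/eqP; move: (hall i); rewrite negbK.
have hq0 : q (fun i => y i * phi i) = 0.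
  by rewrite /q big1 // => i _; rewrite big1 // => j _; rewrite hall' !mul0r.
have hyo : forall i, i != m -> y i = 0.
  move=> i him; have := hall' i; move/eqP; rewrite mulf_eq0 => /orP[/eqP //|].
  rewrite /phi mulf_eq0 invr_eq0 subr_eq0 (gt_eqF (hpos i)) orbF => /eqP h.
  by move: him; rewrite (hinj h) eqxx.
have hym : y m != 0.
  by case: (eqVneq i0 m) => [<- //|hne]; move: hi0; rewrite hyo ?eqxx.
rewrite /phi in hq0; rewrite hq0 addr0.
rewrite (bigD1 m) //= big1 ?addr0; last by move=> i hi; rewrite hyo ?mul0r.
apply: mulr_gt0 => //; rewrite exprn_even_gt0 //= mulf_neq0 // invr_eq0 (gt_eqF (hpos m)) //.
Qed.

End Q.

Lemma det_rank1 (R : comRingType) n (w : 'cV[R]_n) (r : 'rV[R]_n) :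
  \det (1%:M - w *m r) = 1 - (r *m w) 0 0.
Proof.
pose X := block_mx (1%:M : 'M[R]_1) r w 1%:M.
pose P := block_mx (1%:M : 'M[R]_1) 0 (- w) 1%:M.
have h1 : P *m X = block_mx 1%:M r 0 (1%:M - w *m r).
  rewrite mulmx_block !mul1mx !mul0mx !addr0 mulmx1 addNr mulNmx addrC //.

have h2 : X *m P = block_mx (1%:M - r *m w) r 0 1%:M.
  by rewrite mulmx_block !mulmx1 !mulmx0 !add0r mul1mx mulmxN addrN.

have hP : \det P = 1 by rewrite det_lblock !det1 mulr1.
have := congr1 determinant h1; rewrite det_mulmx hP mul1r det_ublock det1 mul1r => <-.
have := congr1 determinant h2; rewrite det_mulmx hP mulr1 det_ublock det1 mulr1 => ->.
by rewrite det_mx11 !mxE.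
Qed.

Theorem mainTheorem5 (R : realFieldType) (k : nat) (lam : 'I_k -> R)
    (Hdist : injective lam) (Habs : forall j, 1 < `|lam j|)
    (M : 'M[R]_k)
    (HM : M = invmx (diag_mx (\row_j lam j)) *m M *m (invmx (diag_mx (\row_j lam j)))^T
              + (const_mx 1 : 'cV[R]_k) *m (const_mx 1 : 'cV[R]_k)^T) :
  posdef M /\
  ((const_mx 1 : 'cV[R]_k)^T *m invmx M *m (const_mx 1 : 'cV[R]_k)) 0 0
    = 1 - `|\det (diag_mx (\row_j lam j))| ^- 2.
Proof.
set L := diag_mx (\row_j lam j).
pose mu j := (lam j)^-1.
have hlpos j : 0 < `|lam j| by apply: lt_trans (Habs j).
have hl0 j : lam j != 0 by rewrite -normr_gt0.
have hmu j : `|mu j| < 1 by rewrite /mu normfV invf_lt1.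
have hinj : injective mu.
  by move=> i j /(congr1 GRing.inv); rewrite /mu !invrK => /Hdist.
set D := diag_mx (\row_j mu j).
have hLD : L *m D = 1%:M.
  rewrite mulmx_diag -diag_const_mx; congr diag_mx; apply/matrixP => i j.
  by rewrite !mxE /mu divff.
have hinv : invmx L = D.
  have [uL _] := mulmx1_unit hLD.
  by rewrite -[RHS](mulKmx uL) hLD mulmx1.
rewrite hinv tr_diag_mx in HM.
set u := (const_mx 1 : 'cV[R]_k) in HM *.
have hMij i j : M i j = (1 - mu i * mu j)^-1.
  have h : M i j = mu i * M i j * mu j + 1.
    rewrite {1}HM mul_mx_diag mul_diag_mx !mxE big_ord1 !mxE mulr1.
    by [].
  have hp := one_sub_mul_gt0 (hmu i) (hmu j).
  have e : M i j * (1 - mu i * mu j) = 1.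
    have -> : M i j * (1 - mu i * mu j) = M i j - mu i * M i j * mu j by ring.
    by rewrite {1}h; ring.
  by rewrite -[M i j](mulfK (lt0r_neq0 hp)) e mul1r.
have hPD : posdef M.
  split.
    by apply/matrixP => i j; rewrite mxE !hMij mulrC.
  move=> x hx.
  have -> : (x^T *m M *m x) 0 0 = q mu (fun i => x i 0).
    rewrite /q mxE.
    under eq_bigr => j _ do rewrite mxE big_distrl /=.
    rewrite exchange_big /=; apply: eq_bigr => i _; apply: eq_bigr => j _.
    by rewrite !mxE hMij; ring.
  apply: (qpos hmu hinj (n := k)).
    by move=> i hi; have := ltn_ord i; rewrite ltnNge hi.
  apply/existsP; apply: contraNT hx => /existsPn h; apply/eqP/matrixP => i j.
  by rewrite ord1 mxE; apply/eqP; move: (h i); rewrite negbK.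
split => //.
have uM : M \in unitmx.
  rewrite unitmxE unitfE; apply/negP => /det0P [v hv0 hv].
  have := hPD.2 v^T; rewrite trmx_eq0 trmxK hv mul0mx mxE ltxx => H.
  by have := H hv0.
have hdet : D *m M *m D = M *m (1%:M - invmx M *m u *m u^T).
  by rewrite mulmxBr mulmx1 !mulmxA mulmxV // mul1mx {2}HM addrK.
have := congr1 determinant hdet.
rewrite !det_mulmx det_rank1 => e.
have hdM : \det M != 0 by rewrite -unitfE -unitmxE.
have hDL : \det D = (\det L)^-1.
  by rewrite !det_diag -prodfV; apply: eq_bigr => i _; rewrite !mxE.
have e2 : 1 - (u^T *m (invmx M *m u)) 0 0 = \det D ^+ 2.
  by apply: (mulfI hdM); rewrite -e [_ * \det M]mulrC -mulrA expr2.
rewrite -mulmxA.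
have -> : `|\det L| ^- 2 = \det D ^+ 2.
  by rewrite real_normK ?num_real // hDL exprVn.
by rewrite -e2 opprB addrCA subrr addr0.
Qed.
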